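(* Let $f(x,y)=\alpha+\beta x+\gamma y$, where $\alpha,\beta,\gamma$ are positive real numbers with $\alpha\le1$ and $2\beta>\gamma$. For every $\epsilon>0$ there is $\nu_0(\epsilon)$ such that, for all integers $\nu\ge\nu_0(\epsilon)$ and $\mu$ with $$2\nu\le\mu<2\gamma(2\beta-\gamma)\nu^2+(2\alpha-\gamma-1)\nu-\frac{(2-2\alpha+\gamma)^2}{8\gamma(2\beta-\gamma)}-\epsilon,$$ we have $f(x,y)\ge\frac{\mu}{\nu}$ for every $(x,y)\in\Omega:=\{(x,y)\in\mathbb{R}^2: x>0,\ y\ge0,\ x(\tfrac12x+\tfrac12+y)+\nu\ge\mu\}$. *)

(* Defs.v *)
From Stdlib Require Import Reals ZArith.
Open Scope R_scope.

Definition f_lin (alpha beta gamma x y : R) : R := alpha + beta * x + gamma * y.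

Definition Omega (nu mu : R) (x y : R) : Prop :=
  0 < x /\ 0 <= y /\ x * (x / 2 + 1 / 2 + y) + nu >= mu.

(* Main.v *)
Require Import Defs.
From Stdlib Require Import Reals ZArith Lra Psatz.
Open Scope R_scope.

Theorem lemma4p3 (alpha beta gamma : R)
  (Ha : 0 < alpha) (Hb : 0 < beta) (Hg : 0 < gamma)
  (Ha1 : alpha <= 1) (Hbg : 2 * beta > gamma) :
  forall eps : R, 0 < eps ->
  exists nu0 : Z,
  forall nu mu : Z, (nu0 <= nu)%Z ->
    2 * IZR nu <= IZR mu ->
    IZR mu < 2 * gamma * (2 * beta - gamma) * IZR nu ^ 2
             + (2 * alpha - gamma - 1) * IZR nu
             - (2 - 2 * alpha + gamma) ^ 2 / (8 * gamma * (2 * beta - gamma))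
             - eps ->
    forall x y : R, Omega (IZR nu) (IZR mu) x y ->
      f_lin alpha beta gamma x y >= IZR mu / IZR nu.
Proof.
  intros eps Heps.
  set (a := 2 * beta - gamma).
  assert (Ha0 : 0 < a) by (unfold a; lra).
  set (K := a * gamma).
  assert (HK : 0 < K) by (unfold K; nra).
  set (c := 1 + gamma / 2 - alpha).
  assert (Hc : 0 < c) by (unfold c; lra).
  set (d := c ^ 2 / (2 * K) + eps).
  assert (Hd : 0 < d) by (unfold d; assert (0 < c^2 / (2*K)) by (apply Rdiv_lt_0_compat; nra); lra).
  set (B := 1 + (1 + c) ^ 2 / (2 * K) + (2 * c * d + d ^ 2) / (2 * K * eps)).
  assert (HBdef : B = 1 + (1 + c) ^ 2 / (2 * K) + (2 * c * d + d ^ 2) / (2 * K * eps)) by reflexivity.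
  clearbody B.
  exists (up B).
  intros nu mu Hnu Hmu1 Hmu2 x y [Hx [Hy Hom]].
  destruct (archimed B) as [HB _].
  apply IZR_le in Hnu.
  set (n := IZR nu) in *. set (u := IZR mu) in *.
  assert (HB1 : (1 + c) ^ 2 / (2 * K) >= 0).
  { apply Rle_ge; unfold Rdiv; apply Rmult_le_pos; [nra | apply Rlt_le, Rinv_0_lt_compat; nra]. }
  assert (HB2 : (2 * c * d + d ^ 2) / (2 * K * eps) >= 0).
  { apply Rle_ge; unfold Rdiv; apply Rmult_le_pos; [nra | apply Rlt_le, Rinv_0_lt_compat; nra]. }
  assert (Hn1 : n >= 1) by lra.
  assert (HnA : n >= (1 + c) ^ 2 / (2 * K)) by lra.
  assert (HnB : n >= (2 * c * d + d ^ 2) / (2 * K * eps)) by lra.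
  assert (HA : 2 * K * n >= (1 + c) ^ 2).
  { apply Rle_ge. apply (Rmult_le_reg_r (/ (2*K))). apply Rinv_0_lt_compat; lra.
    replace (2 * K * n * / (2 * K)) with n by (field; lra). unfold Rdiv in HnA. lra. }
  assert (HBB : 2 * K * eps * n >= 2 * c * d + d ^ 2).
  { apply Rle_ge. apply (Rmult_le_reg_r (/ (2*K*eps))). apply Rinv_0_lt_compat; nra.
    replace (2 * K * eps * n * / (2 * K * eps)) with n by (field; lra). unfold Rdiv in HnB. lra. }
  set (m := u - n).
  set (M := 2 * K * n ^ 2 - 2 * c * n - d).
  assert (HmM : m < M).
  { unfold m, M, d. unfold K, a, c in *.
    replace ((2 - 2 * alpha + gamma) ^ 2 / (8 * gamma * (2 * beta - gamma)))
      with ((1 + gamma / 2 - alpha) ^ 2 / (2 * ((2 * beta - gamma) * gamma))) in Hmu2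
      by (field; lra). lra. }
  assert (Hmn : n <= m) by (unfold m; lra).
  set (Q := fun z => z ^ 2 + (2 * c * n - 2 * K * n ^ 2) * z + c ^ 2 * n ^ 2).
  assert (Qn : Q n <= 0).
  { unfold Q. assert (n * n * (2 * K * n) >= n*n*(1+c)^2).
    { apply Rle_ge, Rmult_le_compat_l; nra. } nra. }
  assert (QM : Q M <= 0).
  { unfold Q, M.
    replace ((2 * K * n ^ 2 - 2 * c * n - d) ^ 2 +
      (2 * c * n - 2 * K * n ^ 2) * (2 * K * n ^ 2 - 2 * c * n - d) + c ^ 2 * n ^ 2)
      with (- 2 * K * eps * n^2 + 2 * c * d * n + d^2 + (d - eps - c^2/(2*K)) * (2 * K * n^2 - 2*c*n - d) * 2)
      by (unfold d; field; lra).
    replace (d - eps - c^2/(2*K)) with 0 by (unfold d; ring).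
    assert (n * (2 * K * eps * n) >= n * (2 * c * d + d ^ 2)).
    { apply Rle_ge, Rmult_le_compat_l; nra. } nra. }
  assert (Qm : Q m <= 0).
  { assert (Hid : (M - n) * Q m = (M - m) * Q n + (m - n) * Q M - (M - n) * (m - n) * (M - m))
      by (unfold Q; ring).
    assert (0 <= (M - m) * (- Q n)) by nra.
    assert (0 <= (m - n) * (- Q M)) by nra.
    assert (0 <= (M - n) * (m - n) * (M - m)).
    { apply Rmult_le_pos; nra. }
    nra. }
  unfold Q in Qm.
  assert (Hxy : x * y >= m - x ^ 2 / 2 - x / 2) by (unfold m; lra).
  assert (Hn0 : 0 < n) by lra.
  unfold f_lin. apply Rle_ge.
  apply (Rmult_le_reg_r n); [lra|].
  replace (u / n * n) with u by (field; lra).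
  apply (Rmult_le_reg_r x); [lra|].
  apply (Rmult_le_reg_r (2 * a * n)); [nra|].
  assert (Hsq : 0 <= (a * n * x - (c * n + m)) ^ 2) by apply pow2_ge_0.
  assert (Hkey : (c * n + m) ^ 2 <= 2 * K * m * n ^ 2) by nra.
  assert (Hgy : gamma * (x * y) >= gamma * (m - x ^ 2 / 2 - x / 2)) by
    (apply Rle_ge, Rmult_le_compat_l; lra).
  assert (E : (alpha + beta * x + gamma * y) * n * x * (2 * a * n)
     = 2 * a * n * n * (alpha * x + beta * x ^ 2 + gamma * (x * y))) by ring.
  rewrite E.
  assert (H2 : 2 * a * n * n * (gamma * (x * y)) >= 2 * a * n * n * (gamma * (m - x ^ 2 / 2 - x / 2))).
  { apply Rle_ge, Rmult_le_compat_l; [nra | lra]. }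
  unfold K, c, a, m in *. nra.
Qed.
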